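(* Let $X$ be a compact $\ell_1$-convex subset of $\mathbb{R}^n$. Then for $0\le j\le k\le n$, \[ \sum_{P\in G_{n,k}} V_j(\pi_PX)=\binom{n-j}{n-k}V_j(X). \]
   Context: A subset $X\subseteq\mathbb{R}^n$ is $\ell_1$-convex if any two points $x,x'\in X$ are joined by a map $\gamma\colon[0,D]\to X$, $D=\sum_i|x_i-x'_i|$, with $\gamma(0)=x,\gamma(D)=x'$, which is distance-preserving for the $\ell_1$ metric $d(x,y)=\sum_i|x_i-y_i|$. $G_{n,k}$ is the set of $k$-dimensional coordinate subspaces of $\mathbb{R}^n$ (spanned by $k$ of the standard basis vectors), and $\pi_P$ is orthogonal projection onto $P$. For a compact $\ell_1$-convex set $Y$ in a coordinate subspace (or in $\mathbb{R}^n$), $V_j(Y)=\sum_{R\in G_{n,j}}\mathrm{Vol}_j(\pi_RY)$, the $j$th $\ell_1$-intrinsic volume, where $\mathrm{Vol}_j$ is Lebesgue measure on $R$; this value does not depend on the ambient coordinate space in which $Y$ is regarded. *)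

(* Defs.v *)
From mathcomp Require Import all_boot all_order all_algebra.
From mathcomp Require Import all_classical all_reals all_analysis.
Set Implicit Arguments. Unset Strict Implicit. Unset Printing Implicit Defensive.
Import Order.TTheory GRing.Theory Num.Theory.
Import numFieldNormedType.Exports.
Local Open Scope classical_set_scope.
Local Open Scope ring_scope.

(* Points of R^n are functions 'I_n -> R (product = Euclidean topology). *)

Definition l1dist (R : realType) (n : nat) (x y : 'I_n -> R) : R :=
  \sum_(i < n) `|x i - y i|.

Definition l1_convex (R : realType) (n : nat) (X : set ('I_n -> R)) : Prop :=
  forall x x', X x -> X x' ->
    exists gamma : R -> ('I_n -> R),
      [/\ gamma 0 = x, gamma (l1dist x x') = x',
          (forall s, 0 <= s <= l1dist x x' -> X (gamma s)) &
          (forall s t, 0 <= s <= l1dist x x' -> 0 <= t <= l1dist x x' ->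
             l1dist (gamma s) (gamma t) = `|s - t|)].

(* Orthogonal projection onto the coordinate subspace spanned by the
   basis vectors e_i, i \in P (a subset of R^n). *)
Definition proj_fun (R : realType) (n : nat) (P : {set 'I_n}) (x : 'I_n -> R)
  : 'I_n -> R := fun i => if i \in P then x i else 0.

Definition coord_proj (R : realType) (n : nat) (P : {set 'I_n}) (Y : set ('I_n -> R))
  : set ('I_n -> R) := proj_fun P @` Y.

Definition box (R : realType) (n : nat) (S : {set 'I_n})
  (c : option (('I_n -> R) * ('I_n -> R))) : set ('I_n -> R) :=
  match c with
  | None => set0
  | Some (a, b) => [set x | forall i, i \in S -> a i <= x i <= b i]
  end.

Definition box_vol (R : realType) (n : nat) (S : {set 'I_n})
  (c : option (('I_n -> R) * ('I_n -> R))) : \bar R :=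
  match c with
  | None => 0%E
  | Some (a, b) => (\prod_(i in S) Num.max (b i - a i) 0)%:E
  end.

(* Lebesgue (outer) measure Vol_|S| on the coordinate subspace R^S, applied
   to the coordinates in S of the points of A: the infimum of the total
   volume of countable covers by boxes. For A contained in the coordinate
   subspace spanned by S (the only case used), this is the |S|-dimensional
   Lebesgue measure of A inside that subspace (A compact, hence measurable). *)
Definition vol (R : realType) (n : nat) (S : {set 'I_n}) (A : set ('I_n -> R))
  : \bar R :=
  ereal_inf [set (\sum_(0 <= k <oo) box_vol S (c k))%E |
              c in [set c : nat -> option (('I_n -> R) * ('I_n -> R)) |
                    A `<=` \bigcup_k box S (c k)]].

Definition l1_intrinsic_volume (R : realType) (n j : nat) (Y : set ('I_n -> R))
  : \bar R :=
  (\sum_(Q : {set 'I_n} | #|Q| == j) vol Q (coord_proj Q Y))%E.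

(* Main.v *)
Require Import Defs.
From mathcomp Require Import all_boot all_order all_algebra.
From mathcomp Require Import all_classical all_reals all_analysis.
Import Order.TTheory GRing.Theory Num.Theory.
Import numFieldNormedType.Exports.
Local Open Scope classical_set_scope.
Local Open Scope ring_scope.

Lemma projQP (R : realType) n (Q P : {set 'I_n}) (X : set ('I_n -> R)) :
  Q \subset P -> coord_proj Q (coord_proj P X) = coord_proj Q X.
Proof.
move=> sQP; rewrite /coord_proj image_comp; congr image.
apply/funext => x; apply/funext => i; rewrite /proj_fun /=.
by case: ifP => // iQ; rewrite (fintype.subsetP sQP _ iQ).
Qed.

Lemma vol_ge0 (R : realType) n (Q : {set 'I_n}) (A : set ('I_n -> R)) :
  (0 <= vol Q A)%E.
Proof.
apply: le_ereal_inf_tmp => _ [c _ <-]; apply: nneseries_ge0 => m _ _.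
case: (c m) => [[a b]|] //=; rewrite lee_fin; apply: prodr_ge0 => i _.
by rewrite le_max lexx orbT.
Qed.

Lemma vol_notsub (R : realType) n (Q P : {set 'I_n}) (X : set ('I_n -> R)) :
  ~~ (Q \subset P) -> vol Q (coord_proj Q (coord_proj P X)) = 0%E.
Proof.
case/fintype.subsetPn => i0 i0Q i0P.
apply/eqP; rewrite eq_le vol_ge0 andbT.
pose a (m : nat) := fun i : 'I_n => if i == i0 then 0 else - (m%:R : R).
pose b (m : nat) := fun i : 'I_n => if i == i0 then 0 else (m%:R : R).
apply: ereal_inf_lbound; exists (fun m => Some (a m, b m)).
  move=> _ [_ [x _ <-] <-].
  set y := proj_fun Q (proj_fun P x).
  have y0 : y i0 = 0 by rewrite /y /proj_fun i0Q (negbTE i0P).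
  have hs : 0 <= \sum_(i < n) `|y i| by apply: sumr_ge0.
  exists (Num.bound (\sum_(i < n) `|y i|)) => //=.
  move=> i _; rewrite /a /b; case: eqP => [->|_]; first by rewrite y0 lexx.
  rewrite -ler_norml; apply: le_trans (ltW (archi_boundP hs)).
  by rewrite (bigD1 i) //= lerDl sumr_ge0.
apply: eseries0 => m _ _ /=.
rewrite (bigD1 i0) //= /a /b eqxx subrr maxxx mul0r.
by [].
Qed.

(* R^n carries the product (= Euclidean) topology {ptws 'I_n -> R}. *)
Theorem theorem7p2 (R : realType) (n j k : nat) (X : set ('I_n -> R)) :
  @compact {ptws 'I_n -> R} X -> l1_convex X -> (j <= k <= n)%N ->
  (\sum_(P : {set 'I_n} | #|P| == k) l1_intrinsic_volume j (coord_proj P X))%E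
  = (('C(n - j, n - k))%:R%:E * l1_intrinsic_volume j X)%E.
Proof.
move=> _ _ /andP[jk kn]; rewrite /l1_intrinsic_volume.
transitivity (\sum_(P : {set 'I_n} | #|P| == k) \sum_(Q : {set 'I_n} | #|Q| == j)
   (if Q \subset P then vol Q (coord_proj Q X) else 0))%E.
  apply: eq_bigr => P _; apply: eq_bigr => Q _.
  by case: ifP => h; [rewrite projQP | rewrite vol_notsub ?h].
rewrite exchange_big /= mule_natl.
have -> : ((\sum_(Q : {set 'I_n} | #|Q| == j) vol Q (coord_proj Q X)) *+ 'C(n - j, n - k))%E
  = \sum_(Q : {set 'I_n} | #|Q| == j) (vol Q (coord_proj Q X) *+ 'C(n - j, n - k))%R.
  by rewrite sumrMnl.
apply: eq_bigr => Q /eqP hQ.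
rewrite -big_mkcondr /=.
rewrite (reindex_inj (@finset.setC_inj _)) /=.
transitivity (\sum_(B in [set B : {set 'I_n} | B \subset ~: Q & #|B| == (n - k)%N])
   vol Q (coord_proj Q X))%R; last first.
  by rewrite sumr_const cards_draws cardsCs finset.setCK card_ord hQ.
apply: eq_bigl => B; rewrite inE finset.subsetC andbC; congr andb.
have hB := cardsC B; rewrite card_ord in hB; move: (#|B|) (#|~: B|) hB => a b hB.
apply/eqP/eqP => [hk|hm].
  by rewrite -hB hk addnK.
by apply/eqP; rewrite -(eqn_add2l a) hB hm subnK.
Qed.
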